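(* Let $(\|\cdot\|_n)_{n\in\mathbb N}$ be a sequence of norms on $\mathbb R^d$ and $(A_n)_{n\in\mathbb N}$ a sequence of invertible linear operators on $\mathbb R^d$ such that there exist $K,a>0$ with $\|\mathcal A(m,n)x\|_m\le K(m/n)^a\|x\|_n$ and $\|\mathcal A(n,m)x\|_n\le K(m/n)^a\|x\|_m$ for all $m\ge n$ in $\mathbb N$ and $x\in\mathbb R^d$. Set $B_n=\mathcal A(2^{n+1},2^n)$ for $n\ge0$. The following are equivalent: (a) $(A_n)_{n\in\mathbb N}$ admits a strong polynomial dichotomy with respect to $(\|\cdot\|_n)_{n\in\mathbb N}$; (b) $(B_n)_{n\in\mathbb Z^+}$ admits a strong exponential dichotomy with respect to $(\|\cdot\|_{2^n})_{n\in\mathbb Z^+}$.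
   Context: $\mathbb N=\{1,2,\dots\}$, $\mathbb Z^+=\{0,1,2,\dots\}$. For a sequence $(C_n)$ of invertible operators, $\mathcal C(m,n)=C_{m-1}\cdots C_n$ ($m>n$), $\mathrm{Id}$ ($m=n$), $C_m^{-1}\cdots C_{n-1}^{-1}$ ($m<n$); $\mathcal A$ is this for $(A_n)$. Strong polynomial dichotomy w.r.t. norms $(\|\cdot\|_n)_{n\in\mathbb N}$: there exist $K>0$, $a\ge\lambda>0$ and projections $P_n$ with $A_nP_n=P_{n+1}A_n$ such that for $m\ge n$, $x$, $Q_m=\mathrm{Id}-P_m$: $\|\mathcal A(m,n)P_nx\|_m\le K(m/n)^{-\lambda}\|x\|_n$, $\|\mathcal A(n,m)Q_mx\|_n\le K(m/n)^{-\lambda}\|x\|_m$, $\|\mathcal A(m,n)x\|_m\le K(m/n)^a\|x\|_n$, $\|\mathcal A(n,m)x\|_n\le K(m/n)^a\|x\|_m$. Strong exponential dichotomy w.r.t. norms $(|\cdot|_n)_{n\in\mathbb Z^+}$ for $(B_n)_{n\in\mathbb Z^+}$: there exist $K>0$, $a\ge\lambda>0$, projections $\tilde P_n$ with $B_n\tilde P_n=\tilde P_{n+1}B_n$ such that for $m\ge n$, $x$, $\tilde Q_m=\mathrm{Id}-\tilde P_m$: $|\mathcal B(m,n)\tilde P_nx|_m\le Ke^{-\lambda(m-n)}|x|_n$, $|\mathcal B(n,m)\tilde Q_mx|_n\le Ke^{-\lambda(m-n)}|x|_m$, $|\mathcal B(m,n)x|_m\le Ke^{a(m-n)}|x|_n$,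 $|\mathcal B(n,m)x|_n\le Ke^{a(m-n)}|x|_m$. *)

(* Defs.v *)
From HB Require Import structures.
From mathcomp Require Import all_boot all_order all_algebra.
From mathcomp Require Import all_classical all_reals all_analysis.
Set Implicit Arguments. Unset Strict Implicit. Unset Printing Implicit Defensive.
Import Order.TTheory GRing.Theory Num.Theory.
Local Open Scope ring_scope.

Section Defs.
Variables (R : realType) (d : nat).

Definition is_norm (N : 'cV[R]_d -> R) : Prop :=
  [/\ forall x, N x = 0 -> x = 0,
      forall (c : R) x, N (c *: x) = `|c| * N x &
      forall x y, N (x + y) <= N x + N y].

Fixpoint cfwd (C : nat -> 'M[R]_d) (n k : nat) : 'M[R]_d :=
  match k with
  | 0 => 1%:M
  | k'.+1 => C (n + k')%N *m cfwd C n k'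
  end.

Fixpoint cbwd (C : nat -> 'M[R]_d) (m k : nat) : 'M[R]_d :=
  match k with
  | 0 => 1%:M
  | k'.+1 => cbwd C m k' *m invmx (C (m + k')%N)
  end.

(* cocycle: cocycle C m n = C_(m-1)...C_n (m>n), Id (m=n), C_m^{-1}...C_(n-1)^{-1} (m<n) *)
Definition cocycle (C : nat -> 'M[R]_d) (m n : nat) : 'M[R]_d :=
  if (n <= m)%N then cfwd C n (m - n) else cbwd C m (n - m).

Definition is_proj (P : 'M[R]_d) : Prop := P *m P = P.

Definition strong_poly_dichotomy (A : nat -> 'M[R]_d) (N : nat -> 'cV[R]_d -> R) : Prop :=
  exists (K a lam : R) (P : nat -> 'M[R]_d),
    [/\ 0 < K, 0 < lam, lam <= a,
        (forall n, (1 <= n)%N -> is_proj (P n)) &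
        (forall n, (1 <= n)%N -> A n *m P n = P n.+1 *m A n)] /\
        forall m n, (1 <= n)%N -> (n <= m)%N -> forall x : 'cV[R]_d,
          [/\ N m (cocycle A m n *m (P n *m x)) <= K * powR (m%:R / n%:R) (- lam) * N n x,
              N n (cocycle A n m *m ((1%:M - P m) *m x)) <= K * powR (m%:R / n%:R) (- lam) * N m x,
              N m (cocycle A m n *m x) <= K * powR (m%:R / n%:R) a * N n x &
              N n (cocycle A n m *m x) <= K * powR (m%:R / n%:R) a * N m x].

Definition strong_exp_dichotomy (B : nat -> 'M[R]_d) (N : nat -> 'cV[R]_d -> R) : Prop :=
  exists (K a lam : R) (P : nat -> 'M[R]_d),
    [/\ 0 < K, 0 < lam, lam <= a,
        (forall n, is_proj (P n)) &
        (forall n, B n *m P n = P n.+1 *m B n)] /\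
        forall m n, (n <= m)%N -> forall x : 'cV[R]_d,
          [/\ N m (cocycle B m n *m (P n *m x)) <= K * expR (- lam * (m - n)%:R) * N n x,
              N n (cocycle B n m *m ((1%:M - P m) *m x)) <= K * expR (- lam * (m - n)%:R) * N m x,
              N m (cocycle B m n *m x) <= K * expR (a * (m - n)%:R) * N n x &
              N n (cocycle B n m *m x) <= K * expR (a * (m - n)%:R) * N m x].

End Defs.

(* Main.v *)
Require Import Defs.
From HB Require Import structures.
From mathcomp Require Import all_boot all_order all_algebra.
From mathcomp Require Import all_classical all_reals all_analysis.
From mathcomp Require Import ring lra.
Import Order.TTheory GRing.Theory Num.Theory.
Local Open Scope ring_scope.

Lemma invmxM' (R : comUnitRingType) n (A B : 'M[R]_n) :
  A \in unitmx -> B \in unitmx -> invmx (A *m B) = invmx B *m invmx A.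
Proof.
move=> uA uB; have uAB : A *m B \in unitmx by rewrite unitmx_mul uA uB.
by rewrite -[RHS]mul1mx -(mulVmx uAB) -!mulmxA (mulmxA B) (mulmxV uB) mul1mx
  (mulmxV uA) mulmx1.
Qed.

Lemma cocycle_gen (R : realType) d (C Psi : nat -> 'M[R]_d) k0 :
  (forall k, (k0 <= k)%N -> Psi k \in unitmx) ->
  (forall k, (k0 <= k)%N -> C k = Psi k.+1 *m invmx (Psi k)) ->
  forall m n, (k0 <= m)%N -> (k0 <= n)%N ->
  cocycle C m n = Psi m *m invmx (Psi n).
Proof.
move=> uP hC.
have hf : forall n k, (k0 <= n)%N -> cfwd C n k = Psi (n + k)%N *m invmx (Psi n).
  move=> n k hn; elim: k => [|k IH] /=; first by rewrite addn0 mulmxV ?uP.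
  have h1 : (k0 <= n + k)%N by apply: leq_trans hn (leq_addr _ _).
  by rewrite IH hC // mulmxA mulmxKV ?uP // addnS.
have hb : forall m k, (k0 <= m)%N -> cbwd C m k = Psi m *m invmx (Psi (m + k)%N).
  move=> m k hm; elim: k => [|k IH] /=; first by rewrite addn0 mulmxV ?uP.
  have h1 : (k0 <= m + k)%N by apply: leq_trans hm (leq_addr _ _).
  rewrite IH hC // invmxM' ?uP ?unitmx_inv ?uP ?(leq_trans h1) //.
  by rewrite invmxK mulmxA mulmxKV ?uP // addnS.
move=> m n hm hn; rewrite /cocycle; case: leqP => h.
  by rewrite hf // subnKC.
by rewrite hb // subnKC // ltnW.
Qed.

Definition Phi {R : realType} {d} (A : nat -> 'M[R]_d) k := cfwd A 1 k.-1.

Lemma PhiS (R : realType) d (A : nat -> 'M[R]_d) k : (0 < k)%N ->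
  Phi A k.+1 = A k *m Phi A k.
Proof. by case: k => // k _; rewrite /Phi /= add1n. Qed.

Lemma Phi_unit (R : realType) d (A : nat -> 'M[R]_d) k :
  (forall n, (1 <= n)%N -> A n \in unitmx) -> (0 < k)%N -> Phi A k \in unitmx.
Proof.
move=> hA; elim: k => // k IH _; case: k IH => [|k] IH.
  by rewrite /Phi /= unitmx1.
by rewrite PhiS // unitmx_mul hA // IH.
Qed.

Lemma Phi1 (R : realType) d (A : nat -> 'M[R]_d) : Phi A 1 = 1%:M.
Proof. by []. Qed.

Lemma cocycleA (R : realType) d (A : nat -> 'M[R]_d) m n :
  (forall n, (1 <= n)%N -> A n \in unitmx) -> (0 < m)%N -> (0 < n)%N ->
  cocycle A m n = Phi A m *m invmx (Phi A n).
Proof.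
move=> hA; apply: cocycle_gen => k hk; first exact: Phi_unit.
by rewrite PhiS // mulmxK // Phi_unit.
Qed.

Lemma cocycleB (R : realType) d (A : nat -> 'M[R]_d) m n :
  (forall n, (1 <= n)%N -> A n \in unitmx) ->
  cocycle (fun j => cocycle A (2 ^ j.+1) (2 ^ j)) m n =
  Phi A (2 ^ m) *m invmx (Phi A (2 ^ n)).
Proof.
move=> hA; apply: (@cocycle_gen _ _ _ (fun j => Phi A (2 ^ j)) 0) => // k _.
  by apply: Phi_unit; rewrite // expn_gt0.
by rewrite cocycleA // expn_gt0.
Qed.

Lemma norm_ge0' (R : realType) d (N : 'cV[R]_d -> R) : is_norm N -> forall x, 0 <= N x.
Proof.
case=> _ hs ht x.
have h0 : N 0 = 0 by rewrite -(scale0r x) hs normr0 mul0r.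
have hN : N (- x) = N x by rewrite -scaleN1r hs normrN normr1 mul1r.
have := ht x (- x); rewrite subrr h0 hN; lra.
Qed.

Lemma powR_pos (R : realType) (x c : R) : 0 < x -> powR x c = expR (c * ln x).
Proof. by move=> hx; rewrite /powR gt_eqF. Qed.

Lemma ln2_gt0 (R : realType) : 0 < ln (2 : R).
Proof. by apply: ln_gt0; lra. Qed.

Lemma powR_2pow (R : realType) (m n : nat) (c : R) : (n <= m)%N ->
  powR ((2 ^ m)%:R / (2 ^ n)%:R) c = expR (c * ln 2 * (m - n)%:R).
Proof.
move=> h; rewrite -(subnKC h) addKn expnD natrM mulrAC mulfV; last first.
  by rewrite pnatr_eq0 -lt0n expn_gt0.
rewrite mul1r powR_pos; last by rewrite ltr0n expn_gt0.
by rewrite natrX lnXn // -[_ *+ _]mulr_natr mulrA.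
Qed.

Lemma powR_le2 (R : realType) (x a : R) : 1 <= x -> x <= 2 -> 0 <= a ->
  powR x a <= powR 2 a.
Proof.
move=> h1 h2 ha; apply: ge0_ler_powR => //; rewrite nnegrE; lra.
Qed.

Lemma ratio_bounds (R : realType) (q m : nat) : (2 ^ q <= m)%N -> (m < 2 ^ q.+1)%N ->
  1 <= (m%:R / (2 ^ q)%:R : R) <= 2.
Proof.
move=> h1 h2; have hp : (0 : R) < (2 ^ q)%:R by rewrite ltr0n expn_gt0.
rewrite ler_pdivlMr // ler_pdivrMr // mul1r ler_nat h1 /=.
by rewrite -natrM ler_nat -expnS ltnW.
Qed.

Lemma expbound (R : realType) (lam : R) (m n p q : nat) : 0 < lam -> (0 < n)%N ->
  (2 ^ p <= n)%N -> (n <= m)%N -> (m < 2 ^ q.+1)%N -> (p <= q)%N ->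
  expR (- lam * (q - p)%:R) <= expR lam * powR (m%:R / n%:R) (- (lam / ln 2)).
Proof.
move=> hl hn hpn hnm hmq hpq.
have hn' : (0 : R) < n%:R by rewrite ltr0n.
have hm' : (0 : R) < m%:R by rewrite ltr0n (leq_trans hn hnm).
rewrite powR_pos ?divr_gt0 // -expRD ler_expR.
rewrite ln_div ?posrE //.
have L := ln2_gt0 R.
have h1 : ln (m%:R : R) <= ln 2 * q.+1%:R.
  rewrite mulr_natr -lnXn; last lra.
  have h2p : (0:R) < 2 ^+ q.+1 by rewrite exprn_gt0 //; lra.
  by rewrite ler_ln ?posrE // -natrX ler_nat ltnW.
have h2 : ln 2 * p%:R <= ln (n%:R : R).
  rewrite mulr_natr -lnXn; last lra.
  have h2p : (0:R) < 2 ^+ p by rewrite exprn_gt0 //; lra.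
  by rewrite ler_ln ?posrE // -natrX ler_nat.
set t := (ln (m%:R : R) - ln n%:R) / ln 2.
have ht : t <= q.+1%:R - p%:R.
  by rewrite /t ler_pdivrMr //; lra.
have -> : - (lam / ln 2) * (ln m%:R - ln n%:R) = - (lam * t).
  by rewrite /t; field; lra.
have : lam * t <= lam * (q.+1%:R - p%:R) by rewrite ler_pM2l.
rewrite natrB // -addn1 natrD; lra.
Qed.

Lemma chain3 (R : realType) (X Y Z V al be ga T : R) :
  0 <= V -> 0 <= Y -> 0 <= Z -> 0 <= al -> 0 <= be -> 0 <= ga -> al * be * ga <= T ->
  X <= al * Y -> Y <= be * Z -> Z <= ga * V -> X <= T * V.
Proof.
move=> hV hY hZ hal hbe hga hT h1 h2 h3.
apply: (le_trans h1); apply: (le_trans (ler_wpM2l hal h2)).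
rewrite mulrA; apply: (le_trans (ler_wpM2l (mulr_ge0 hal hbe) h3)).
by rewrite mulrA ler_wpM2r.
Qed.

Lemma finalT (R : realType) (Kg c K e W a1 a2 b : R) :
  0 <= Kg -> 0 <= c -> 0 <= K -> 0 <= e -> 0 <= W ->
  0 <= a1 -> a1 <= Kg * c -> 0 <= a2 -> a2 <= Kg * c -> 0 <= b -> b <= K * (e * W) ->
  a1 * b * a2 <= (Kg + Kg * c * (K * e) * (Kg * c)) * W.
Proof.
move=> hKg hc hK he hW h1 h1' h2 h2' hb hb'.
have s1 : a1 * b * a2 <= Kg * c * (K * (e * W)) * (Kg * c).
  by apply: ler_pM => //; [apply: mulr_ge0 | apply: ler_pM].
have s2 : 0 <= Kg * W by apply: mulr_ge0.
have -> : (Kg + Kg * c * (K * e) * (Kg * c)) * W =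
  Kg * W + Kg * c * (K * (e * W)) * (Kg * c) by ring.
lra.
Qed.

Theorem proposition2p3 (R : realType) (d : nat)
  (N : nat -> 'cV[R]_d -> R) (A : nat -> 'M[R]_d)
  (hN : forall n, (1 <= n)%N -> is_norm (N n))
  (hA : forall n, (1 <= n)%N -> A n \in unitmx)
  (hgrowth : exists K a : R, [/\ 0 < K, 0 < a &
     forall m n, (1 <= n)%N -> (n <= m)%N -> forall x : 'cV[R]_d,
       N m (cocycle A m n *m x) <= K * powR (m%:R / n%:R) a * N n x /\
       N n (cocycle A n m *m x) <= K * powR (m%:R / n%:R) a * N m x]) :
  strong_poly_dichotomy A N <->
  strong_exp_dichotomy (fun n => cocycle A (2 ^ n.+1) (2 ^ n)) (fun n => N (2 ^ n)%N).
Proof.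
have hpow : forall j, (0 < 2 ^ j)%N by move=> j; rewrite expn_gt0.
have cB : forall m n, cocycle (fun j => cocycle A (2 ^ j.+1) (2 ^ j)) m n =
    cocycle A (2 ^ m) (2 ^ n).
  by move=> m n; rewrite cocycleB // cocycleA.
have uF : forall k, (0 < k)%N -> Phi A k \in unitmx by move=> k; apply: Phi_unit.
split.
  move=> [K [a [lam [P [[K0 l0 la Pp Pinv] Hb]]]]].
  have Pf : forall n k, (1 <= n)%N -> cfwd A n k *m P n = P (n + k)%N *m cfwd A n k.
    move=> n k hn; elim: k => [|k IH] /=; first by rewrite mul1mx mulmx1 addn0.
    rewrite -mulmxA IH mulmxA Pinv ?(leq_trans hn (leq_addr _ _)) //.
    by rewrite -mulmxA addnS.
  have L := ln2_gt0 R.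
  exists K, (a * ln 2), (lam * ln 2), (fun j => P (2 ^ j)%N); split.
    split => //.
    - by apply: mulr_gt0.
    - by apply: ler_wpM2r => //; apply: ltW.
    - by move=> j; apply: Pp.
    move=> j; rewrite /cocycle ifT; last by rewrite expnS leq_pmull.
    by rewrite Pf // subnKC // expnS leq_pmull.
  move=> m n hnm x; rewrite !cB.
  have := Hb (2 ^ m)%N (2 ^ n)%N (hpow n) (@leq_pexp2l 2 _ _ isT hnm) x.
  rewrite !powR_2pow //; case=> h1 h2 h3 h4.
  by split; rewrite // -mulNr.
move=> [K [a [lam [P [[K0 l0 la Pp Pinv] Hb]]]]].
case: hgrowth => Kg [ag [Kg0 ag0 Hg]].
have PF : forall j, P j = Phi A (2 ^ j) *m P 0%N *m invmx (Phi A (2 ^ j)).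
  elim=> [|j IH]; first by rewrite expn0 Phi1 invmx1 mul1mx mulmx1.
  have := Pinv j; rewrite cocycleA // => E.
  have -> : P j.+1 = P j.+1 *m (Phi A (2 ^ j.+1) *m invmx (Phi A (2 ^ j)))
      *m (Phi A (2 ^ j) *m invmx (Phi A (2 ^ j.+1))).
    by rewrite !mulmxA mulmxKV ?uF // mulmxK ?uF.
  by rewrite -E IH !mulmxA mulmxKV ?uF // mulmxKV ?uF.
have L := ln2_gt0 R.
set c := powR 2 ag.
have c0 : 0 <= c by apply: powR_ge0.
set Kpp := Kg + Kg * c * (K * expR lam) * (Kg * c).
have Kpp0 : 0 < Kpp.
  rewrite /Kpp; have : 0 <= Kg * c * (K * expR lam) * (Kg * c).
    by repeat apply: mulr_ge0 => //; apply: ltW.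
  lra.
exists Kpp, (ag + lam / ln 2), (lam / ln 2),
  (fun k => Phi A k *m P 0%N *m invmx (Phi A k)); split.
  split => //.
  - by apply: divr_gt0.
  - lra.
  - move=> n hn; rewrite /is_proj !mulmxA mulmxKV ?uF //.
    by rewrite -(mulmxA (Phi A n) (P 0%N) (P 0%N)) (Pp 0%N : P 0%N *m P 0%N = P 0%N).
  - move=> n hn; rewrite PhiS // invmxM' ?hA ?uF //.
    by rewrite !mulmxA mulmxKV ?hA.
move=> m n hn hnm x.
have hm : (0 < m)%N by apply: leq_trans hnm.
set p := trunc_log 2 n; set q := trunc_log 2 m.
have hp1 : (2 ^ p <= n)%N by apply: trunc_logP.
have hp2 : (n < 2 ^ p.+1)%N by apply: trunc_log_ltn.
have hq1 : (2 ^ q <= m)%N by apply: trunc_logP.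
have hq2 : (m < 2 ^ q.+1)%N by apply: trunc_log_ltn.
have hpq : (p <= q)%N by apply: leq_trunc_log.
have Wb := @expbound R lam m n p q l0 hn hp1 hnm hq2 hpq.
have c1 : powR (m%:R / (2 ^ q)%:R) ag <= c.
  by have /andP[r1 r2] := @ratio_bounds R q m hq1 hq2; apply: powR_le2 => //; apply: ltW.
have c2 : powR (n%:R / (2 ^ p)%:R) ag <= c.
  by have /andP[r1 r2] := @ratio_bounds R p n hp1 hp2; apply: powR_le2 => //; apply: ltW.
have nN : forall k y, (0 < k)%N -> 0 <= N k y by move=> k y hk; apply: norm_ge0'; apply: hN.
have gb : forall z, 0 <= K * expR z by move=> z; apply: mulr_ge0; [apply: ltW | apply: expR_ge0].
have fT : forall a1 a2, 0 <= a1 -> a1 <= Kg * c -> 0 <= a2 -> a2 <= Kg * c ->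
    a1 * (K * expR (- lam * (q - p)%:R)) * a2 <= Kpp * powR (m%:R / n%:R) (- (lam / ln 2)).
  move=> a1 a2 h1 h1' h2 h2'; apply: (@finalT R) => //;
    try by [apply: ltW | apply: expR_ge0 | apply: powR_ge0].
  - by apply: ler_wpM2l => //; apply: ltW.
have gK1 : forall z, 0 <= z -> z <= c -> 0 <= Kg * z /\ Kg * z <= Kg * c.
  by move=> z z0 zc; split; [apply: mulr_ge0 => //; apply: ltW | apply: ler_wpM2l => //; apply: ltW].
have p0 : (0 < 2 ^ p)%N by rewrite expn_gt0.
have q0 : (0 < 2 ^ q)%N by rewrite expn_gt0.
have hpq' : (2 ^ p <= 2 ^ q)%N by apply: leq_pexp2l.
have Hbqp := Hb q p hpq.
have mono : 1 <= (m%:R / n%:R : R).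
  by rewrite ler_pdivlMr ?ltr0n // mul1r ler_nat.
have Kle : Kg <= Kpp.
  rewrite /Kpp; have : 0 <= Kg * c * (K * expR lam) * (Kg * c).
    by repeat apply: mulr_ge0 => //; apply: ltW.
  lra.
have a3 : powR (m%:R / n%:R) ag <= powR (m%:R / n%:R) (ag + lam / ln 2).
  apply: ler_powR => //; have : 0 < lam / ln 2 by apply: divr_gt0.
  lra.
have g3 : Kg * powR (m%:R / n%:R) ag <= Kpp * powR (m%:R / n%:R) (ag + lam / ln 2).
  apply: ler_pM => //; try apply: ltW => //; try apply: powR_ge0.
split.
- have -> : cocycle A m n *m (Phi A n *m P 0%N *m invmx (Phi A n) *m x) =
    cocycle A m (2 ^ q) *m (cocycle (fun j => cocycle A (2 ^ j.+1) (2 ^ j)) q p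
      *m (P p *m (cocycle A (2 ^ p) n *m x))).
    rewrite cocycleB // !cocycleA // (PF p) !mulmxA.
    by rewrite !mulmxKV ?uF.
  have [A1 A2] := gK1 _ (powR_ge0 _ _) c1.
  have [B1 B2] := gK1 _ (powR_ge0 _ _) c2.
  apply: (@chain3 R _ (N (2 ^ q)%N (cocycle (fun j => cocycle A (2 ^ j.+1) (2 ^ j)) q p *m (P p *m (cocycle A (2 ^ p) n *m x)))) (N (2 ^ p)%N (cocycle A (2 ^ p) n *m x)) (N n x) _ _ _ _ _ _ _ _ _ _ (fT _ _ A1 A2 B1 B2)) => //; try apply: nN => //.
  + exact: (Hg m (2 ^ q)%N q0 hq1 _).1.
  + by case: (Hbqp (cocycle A (2 ^ p) n *m x)).
  + exact: (Hg n (2 ^ p)%N p0 hp1 _).2.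
- have -> : cocycle A n m *m ((1%:M - Phi A m *m P 0%N *m invmx (Phi A m)) *m x) =
    cocycle A n (2 ^ p) *m (cocycle (fun j => cocycle A (2 ^ j.+1) (2 ^ j)) p q
      *m ((1%:M - P q) *m (cocycle A (2 ^ q) m *m x))).
    rewrite cocycleB // !cocycleA // (PF q).
    have E : forall k, (0 < k)%N -> 1%:M - Phi A k *m P 0%N *m invmx (Phi A k) =
        Phi A k *m (1%:M - P 0%N) *m invmx (Phi A k).
      move=> k hk; rewrite mulmxBr mulmxBl mulmx1 mulmxV ?uF //.
    rewrite !E // !mulmxA.
    by rewrite !mulmxKV ?uF.
  have [A1 A2] := gK1 _ (powR_ge0 _ _) c1.
  have [B1 B2] := gK1 _ (powR_ge0 _ _) c2.
  apply: (@chain3 R _ (N (2 ^ p)%N (cocycle (fun j => cocycle A (2 ^ j.+1) (2 ^ j)) p q *m ((1%:M - P q) *m (cocycle A (2 ^ q) m *m x)))) (N (2 ^ q)%N (cocycle A (2 ^ q) m *m x)) (N m x) _ _ _ _ _ _ _ _ _ _ (fT _ _ B1 B2 A1 A2)) => //; try apply: nN => //.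
  + exact: (Hg n (2 ^ p)%N p0 hp1 _).1.
  + by case: (Hbqp (cocycle A (2 ^ q) m *m x)).
  + exact: (Hg m (2 ^ q)%N q0 hq1 _).2.
- apply: le_trans (Hg m n hn hnm x).1 _.
  by apply: ler_wpM2r => //; apply: nN.
- apply: le_trans (Hg m n hn hnm x).2 _.
  by apply: ler_wpM2r => //; apply: nN.
Qed.
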